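(* For every integer $r\ge1$, the characteristic polynomial of the signed adjacency matrix of $\mathcal{Q}_{r,r,2r}$ is $$\det\bigl(xI-M(\mathcal{Q}_{r,r,2r})\bigr)=(x^2+x-1)^{2r-1}\bigl(x^2-(2r-1)x-1\bigr).$$ In particular $\lambda_{\min}(\mathcal{Q}_{r,r,2r})=-\frac{1+\sqrt5}{2}$.
   Context: An edge-signed graph is a finite simple graph each of whose edges is labelled $+$ or $-$; its signed adjacency matrix $M(\mathcal{S})$ has $(u,v)$-entry $1$ for a $(+)$-edge, $-1$ for a $(-)$-edge, $0$ otherwise, and $\lambda_{\min}(\mathcal{S})$ denotes its smallest eigenvalue. For non-negative integers $p,q,r$ with $p+q\le r$, $\mathcal{Q}_{p,q,r}$ is the edge-signed graph defined as follows: its vertex set is a disjoint union $V_p\cup V_q\cup V_r$ with $|V_p|=p$, $|V_q|=q$, $|V_r|=r$; choose disjoint subsets $U_p,U_q\subseteq V_r$ with $|U_p|=p$, $|U_q|=q$ and bijections $\sigma:V_p\to U_p$, $\rho:V_q\to U_q$. The $(+)$-edges are all pairs of distinct vertices of $V_r$ together with the pairs $\{v,\sigma(v)\}$, $v\in V_p$; the $(-)$-edges are the pairs $\{v,\rho(v)\}$, $v\in V_q$; there are no other edges. *)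

(* Defs.v *)
From HB Require Import structures.
From mathcomp Require Import all_boot all_order all_algebra.
Set Implicit Arguments. Unset Strict Implicit. Unset Printing Implicit Defensive.
Import Order.TTheory GRing.Theory Num.Theory.
Local Open Scope ring_scope.

(* Vertex set: 'I_(r + p + q), with
     V_r = {0, ..., r-1},
     V_p = {r, ..., r+p-1},
     V_q = {r+p, ..., r+p+q-1}.
   U_p = {0, ..., p-1}, U_q = {p, ..., p+q-1} (disjoint subsets of V_r when p+q <= r),
   sigma (r+k) = k   (k < p),   rho (r+p+k) = p+k   (k < q);
   i.e. both bijections are  v |-> v - r  on their domains. *)

Definition Qpos (p q r : nat) (i j : nat) : bool :=
  [|| [&& (i < r)%N, (j < r)%N & i != j],
      [&& (r <= i)%N, (i < r + p)%N & j == (i - r)%N] |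
      [&& (r <= j)%N, (j < r + p)%N & i == (j - r)%N] ].

Definition Qneg (p q r : nat) (i j : nat) : bool :=
  [|| [&& (r + p <= i)%N, (i < r + p + q)%N & j == (i - r)%N] |
      [&& (r + p <= j)%N, (j < r + p + q)%N & i == (j - r)%N] ].

Definition Qmx (R : nzRingType) (p q r : nat) : 'M[R]_(r + p + q) :=
  \matrix_(i, j) (if Qpos p q r i j then 1
                  else if Qneg p q r i j then -1 else 0).

Definition is_lambda_min (R : realFieldType) (n : nat) (A : 'M[R]_n) (a : R) : Prop :=
  eigenvalue A a /\ (forall b, eigenvalue A b -> a <= b).

(* Main.v *)
From HB Require Import structures.
From mathcomp Require Import all_boot all_order all_algebra.
From mathcomp Require Import zify ring.
Require Import Defs.
Set Implicit Arguments. Unset Strict Implicit. Unset Printing Implicit Defensive.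
Import Order.TTheory GRing.Theory Num.Theory.
Local Open Scope ring_scope.

Lemma rank1_det (R : comNzRingType) n (a b : R) :
  a * \det (a%:M - b *: const_mx 1 : 'M[R]_n) = a ^+ n * (a - b *+ n).
Proof.
pose u : 'cV[R]_n := const_mx 1.
have uu : u^T *m u = (n%:R)%:M.
  apply/matrixP => i j; rewrite !mxE (ord1 i) (ord1 j) /=.
  under eq_bigr do rewrite !mxE mulr1.
  by rewrite sumr_const card_ord.
have J : u *m u^T = const_mx 1.
  apply/matrixP => i j; rewrite !mxE big_ord1 !mxE mulr1 //.
pose Mm := block_mx (a%:M : 'M_n) (b *: u) u^T (1 : 'M_1).
pose L := block_mx (1 : 'M_n) 0 (- u^T) (a%:M : 'M_1).
pose Rt := block_mx (1 : 'M_n) 0 (- u^T) (1 : 'M_1).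
have h1 : \det (L *m Mm) = a ^+ n * (a - b *+ n).
  rewrite /L /Mm mulmx_block !mul0mx !mul1mx !addr0 !mulNmx mul_mx_scalar mul_scalar_mx addNr -scalemxAr uu scale_scalar_mx mulmx1 det_ublock det_scalar.
  rewrite -raddfN -raddfD /= det_scalar1 mulr_natr [_ + a]addrC //.
have h2 : \det (Mm *m Rt) = \det (a%:M - b *: const_mx 1 : 'M[R]_n).
  rewrite /Rt /Mm mulmx_block !mulmx0 !mulmx1 !add0r !mulmxN -scalemxAl J mul1mx addrN.
  rewrite det_ublock det1 mulr1. reflexivity.
rewrite -h2 -h1 !det_mulmx /L /Rt !det_lblock !det1 det_scalar1 mul1r mulr1 mulrC; by rewrite mul1r mulrC.

Qed.

Lemma schur (R : idomainType) n m (A : 'M[{poly R}]_n) (B : 'M[{poly R}]_(n, m)) :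
  \det (block_mx ('X%:M - A) (- B) (- B^T) ('X%:M : 'M_m)) * 'X ^+ n =
  \det ('X *: ('X%:M - A) - B *m B^T) * 'X ^+ m.
Proof.
pose T := block_mx ('X%:M - A) (- B) (- B^T) ('X%:M : 'M_m).
pose W := block_mx ('X%:M : 'M_n) 0 B^T (1 : 'M_m).
have hW : \det W = 'X ^+ n by rewrite /W det_lblock det1 det_scalar mulr1.
have hTW : T *m W = block_mx ('X *: ('X%:M - A) - B *m B^T) (- B) 0 ('X%:M : 'M_m).
  rewrite /T /W mulmx_block !mulmx0 !mulmx1 !add0r mul_mx_scalar !mulNmx.
  by rewrite mul_scalar_mx mul_mx_scalar addNr.
by rewrite -hW -det_mulmx hTW det_ublock det_scalar.
Qed.

Definition Am (R : nzRingType) r : 'M[R]_(2*r) := const_mx 1 - 1%:M.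
Definition Bm (R : nzRingType) r : 'M[R]_(2*r, r + r) :=
  \matrix_(i, j) if (i == j :> nat) then (if (j < r)%N then 1 else -1) else 0.

Lemma splitOrd m n (i : 'I_(m + n)) :
  (exists k : 'I_m, i = lshift n k) \/ (exists k : 'I_n, i = rshift m k).
Proof.
case: (splitP i) => k hk; [left|right]; exists k; exact: val_inj.
Qed.

Lemma Qblock (R : nzRingType) r :
  castmx (esym (addnA _ _ _), esym (addnA _ _ _)) (Qmx R r r (2*r)) =
  block_mx (Am R r) (Bm R r) (Bm R r)^T 0.
Proof.
apply/matrixP => i j; rewrite castmxE mxE /=.
case: (splitOrd i) => [[k ->]|[k ->]]; case: (splitOrd j) => [[l ->]|[l ->]];
  have hk := ltn_ord k; have hl := ltn_ord l.
- rewrite block_mxEul !mxE /=.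
  have -> : Qpos r r (2 * r) k l = (k != l :> nat) by rewrite /Qpos; apply/idP/idP; lia.
  have -> : Qneg r r (2 * r) k l = false by rewrite /Qneg; apply/idP/idP; lia.
  by rewrite -val_eqE /=; case: eqP => //= _; rewrite ?subrr ?subr0.
- rewrite block_mxEur !mxE /=.
  have -> : Qpos r r (2 * r) k (2 * r + l) = (k == l :> nat) && (l < r)%N
    by rewrite /Qpos; apply/idP/idP; lia.
  have -> : Qneg r r (2 * r) k (2 * r + l) = (k == l :> nat) && (r <= l)%N
    by rewrite /Qneg; apply/idP/idP; lia.
  by case: eqP => //= _; case: ltnP.
- rewrite block_mxEdl !mxE /=.
  have -> : Qpos r r (2 * r) (2 * r + k) l = (l == k :> nat) && (k < r)%N
    by rewrite /Qpos; apply/idP/idP; lia.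
  have -> : Qneg r r (2 * r) (2 * r + k) l = (l == k :> nat) && (r <= k)%N
    by rewrite /Qneg; apply/idP/idP; lia.
  by case: eqP => //= _; case: ltnP.
- rewrite block_mxEdr !mxE /=.
  have -> : Qpos r r (2 * r) (2 * r + k) (2 * r + l) = false
    by rewrite /Qpos; apply/idP/idP; lia.
  have -> : Qneg r r (2 * r) (2 * r + k) (2 * r + l) = false
    by rewrite /Qneg; apply/idP/idP; lia.
  by [].
Qed.

Lemma BB (R : nzRingType) r : Bm R r *m (Bm R r)^T = 1%:M.
Proof.
have e2 : (2 * r = r + r)%N by lia.
apply/matrixP => i j; rewrite !mxE (bigD1 (cast_ord e2 i)) //= big1 ?addr0.
  rewrite !mxE /= eqxx -val_eqE /= eq_sym.
  by case: eqP => _ ; case: ltnP => _; rewrite ?mulr1 ?mulr0 ?mulrNN ?mulr1.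
move=> k hk; rewrite !mxE.
case: eqP => [e|]; last by rewrite mul0r.
by move: hk; rewrite -val_eqE /= e eqxx.
Qed.

Lemma char_poly_cast n m (e : n = m) (R : nzRingType) (A : 'M[R]_n) :
  char_poly (castmx (e, e) A) = char_poly A.
Proof. by case: m / e; rewrite castmx_id. Qed.

Lemma charQ (R : idomainType) r (hr : (1 <= r)%N) :
  char_poly (Qmx R r r (2 * r)) =
    ('X ^+ 2 + 'X - 1) ^+ (2 * r - 1) * ('X ^+ 2 - ((2 * r - 1)%N)%:R *: 'X - 1).
Proof.
rewrite -(char_poly_cast (esym (addnA _ _ _))) Qblock.
set a : {poly R} := 'X ^+ 2 + 'X - 1.
have a0 : a != 0.
  apply/eqP => h; have := congr1 (horner^~ 0) h.
  by rewrite /a !hornerE /= expr0n /= add0r => /eqP; rewrite oppr_eq0 oner_eq0.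
have hT : char_poly_mx (block_mx (Am R r) (Bm R r) (Bm R r)^T 0) =
    block_mx ('X%:M - map_mx polyC (Am R r)) (- map_mx polyC (Bm R r))
       (- (map_mx polyC (Bm R r))^T) ('X%:M : 'M_(r + r)).
  rewrite /char_poly_mx map_block_mx map_mx0 (scalar_mx_block (2 * r) (r + r)) opp_block_mx
    add_block_mx !add0r subr0 map_trmx //.
have hTL : 'X *: ('X%:M - map_mx polyC (Am R r)) - map_mx polyC (Bm R r) *m (map_mx polyC (Bm R r))^T
    = a%:M - 'X *: const_mx 1.
  rewrite map_trmx -map_mxM BB map_mx1 /Am map_mxB map_const_mx map_mx1 /=.
  apply/matrixP => i j; rewrite !mxE /a.
  case: eqP => _ /=; rewrite ?mulr1n ?mulr0n; ring.
have h1 := schur (map_mx polyC (Am R r)) (map_mx polyC (Bm R r)).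
rewrite -hT hTL in h1.
have h2 := rank1_det (2 * r) a 'X.
have Xn0 : ('X ^+ (2 * r) : {poly R}) != 0 by rewrite expf_neq0 // polyX_eq0.
have e2 : (r + r = 2 * r)%N by rewrite mul2n addnn.
have eX : ('X ^+ (r + r) : {poly R}) = 'X ^+ (2 * r) by rewrite e2.
rewrite eX in h1.
rewrite /char_poly (mulIf Xn0 h1).
apply: (mulfI a0); rewrite h2.
have ea : a ^+ (2 * r) = a * a ^+ (2 * r - 1) by rewrite -exprS; congr (_ ^+ _); lia.
rewrite ea -!mulrA; congr (_ * (_ * _)).
rewrite /a -mul_polyC natrB ?muln_gt0 // polyCB polyC_natr mulr1n.
rewrite -mulr_natr; ring.
Qed.

From mathcomp Require Import lra.

Theorem mainTheorem6 (R : rcfType) (r : nat) (hr : (1 <= r)%N) :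
  char_poly (Qmx R r r (2 * r)) =
    ('X ^+ 2 + 'X - 1) ^+ (2 * r - 1) * ('X ^+ 2 - ((2 * r - 1)%N)%:R *: 'X - 1)
  /\ is_lambda_min (Qmx R r r (2 * r)) (- (1 + Num.sqrt 5) / 2).
Proof.
have hc := charQ R hr; split => //.
set s := Num.sqrt (5 : R).
have s0 : 0 <= s by apply: sqrtr_ge0.
have s2 : s ^+ 2 = 5 by rewrite sqr_sqrtr.
set c : R := (2 * r - 1)%:R.
have c0 : 0 <= c by apply: ler0n.
have hk : (0 < 2 * r - 1)%N by lia.
split.
  rewrite eigenvalue_root_char hc /root !hornerE /= -/c.
  rewrite (_ : (- (1 + s) / 2) ^+ 2 + - (1 + s) / 2 - 1 = 0) ?expr0n ?(gtn_eqF hk) ?mul0r //.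
  have -> : (- (1 + s) / 2) ^+ 2 + - (1 + s) / 2 - 1 = (s ^+ 2 - 5) / 4 by field.
  by rewrite s2 subrr mul0r.
move=> b; rewrite eigenvalue_root_char hc /root !hornerE /= -/c mulf_eq0 expf_eq0 hk /=.
case/orP => /eqP h.
  nra.
nra.
Qed.
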